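(* Let $m\ge 3$, let $H=B(l_1,\ldots,l_m)$ with $l_m\ge 3$, and let $G'=H^2$. Let $a,b$ satisfy $1\le a<b\le m$, and let $G$ be the graph obtained from $G'$ by adding an edge between $v_{a,l_a}$ and $v_{b,l_b}$ (if they are not already adjacent). Then $G$ is equitably $(m+2)$-choosable.
   Context: All graphs are finite and simple. For $m,l_1,\ldots,l_m\in\mathbb{N}$ with $l_1\le\cdots\le l_m$, $B(l_1,\ldots,l_m)$ is the graph with vertex set $\{u\}\cup\{v_{i,j}: i\in[m], j\in[l_i]\}$ in which, for each $i\in[m]$, consecutive vertices in the sequence $u, v_{i,1},\ldots,v_{i,l_i}$ are adjacent (and there are no other edges). For a graph $H$, $H^2$ has vertex set $V(H)$ with two vertices adjacent iff their distance in $H$ is 1 or 2. A $k$-assignment $L$ assigns to each vertex a set of exactly $k$ colors; an equitable $L$-coloring of $G$ is a proper coloring $f$ with $f(v)\in L(v)$ such that no color is used more than $\lceil |V(G)|/k\rceil$ times; $G$ is equitably $k$-choosable if it has an equitable $L$-coloring for every $k$-assignment $L$. *)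

(* Defs.v *)
From mathcomp Require Import all_boot.
Set Implicit Arguments. Unset Strict Implicit. Unset Printing Implicit Defensive.

Definition sq_rel (T : finType) (e : rel T) : rel T :=
  fun x y => (x != y) && (e x y || [exists z, e x z && e z y]).

(* The spider B(l_1,...,l_m): vertex None is the centre u, and
   Some (existT i j) (i : 'I_m, j : 'I_(l i)) is v_{i+1, j+1}
   (0-based indices in Rocq, 1-based in the paper). *)
Definition spider_adj (m : nat) (l : 'I_m -> nat)
  : rel (option {i : 'I_m & 'I_(l i)}) :=
  fun x y =>
    match x, y with
    | None, None => false
    | None, Some s => val (tagged s) == 0
    | Some s, None => val (tagged s) == 0
    | Some s, Some t =>
        (tag s == tag t) &&
        (((val (tagged s)).+1 == val (tagged t)) ||
         ((val (tagged t)).+1 == val (tagged s)))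
    end.

Definition leg_end (m : nat) (l : 'I_m -> nat) (a : 'I_m)
  (x : option {i : 'I_m & 'I_(l i)}) : bool :=
  match x with
  | None => false
  | Some s => (tag s == a) && ((val (tagged s)).+1 == l a)
  end.

Definition spider_sq_plus_edge (m : nat) (l : 'I_m -> nat) (a b : 'I_m)
  : rel (option {i : 'I_m & 'I_(l i)}) :=
  fun x y => sq_rel (@spider_adj m l) x y ||
             (@leg_end m l a x && @leg_end m l b y) ||
             (@leg_end m l b x && @leg_end m l a y).

Definition k_assignment (T : finType) (C : eqType) (L : T -> seq C) (k : nat) : Prop :=
  forall v, uniq (L v) /\ size (L v) = k.

Definition ceil_div (n k : nat) : nat := (n + k.-1) %/ k.

Definition equitable_Lcoloring (T : finType) (e : rel T) (C : eqType)
  (L : T -> seq C) (k : nat) (f : T -> C) : Prop :=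
  [/\ forall x y, e x y -> f x != f y,
      forall v, f v \in L v
    & forall c : C, #|[pred v | f v == c]| <= ceil_div #|T| k].

Definition equitably_choosable (T : finType) (e : rel T) (k : nat) : Prop :=
  forall (C : eqType) (L : T -> seq C), k_assignment L k ->
    exists f : T -> C, equitable_Lcoloring e L k f.

(* Main.v *)
Require Import Defs.
From mathcomp Require Import all_boot.
From mathcomp Require Import all_order all_algebra.
From mathcomp Require Import zify.
Set Implicit Arguments. Unset Strict Implicit. Unset Printing Implicit Defensive.
Import Order.TTheory GRing.Theory Num.Theory.

Lemma rank_greedy (T : finType) (C : eqType) (L : T -> seq C) (k : nat)
  (r : T -> nat) : 0 < k -> injective r -> k_assignment L k ->
  exists f : T -> C, (forall x, f x \in L x) /\
    (forall x y, r y < r x -> r x < r y + k -> f x != f y).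
Proof.
move=> k0 rinj HL.
suff H : forall N, exists f : T -> C, (forall x, r x < N -> f x \in L x) /\
    (forall x y, r x < N -> r y < r x -> r x < r y + k -> f x != f y).
  have [f [H1 H2]] := H (\max_(x : T) r x).+1.
  exists f; split=> [x|x y]; first by apply: H1; rewrite ltnS; apply: leq_bigmax.
  by apply: H2; rewrite ltnS; apply: leq_bigmax.
elim=> [|N [f [Hf1 Hf2]]].
  case: (pickP (@predT T)) => [x0 _ | none].
    have [_ sz] := HL x0; case E: (L x0) sz => [|c0 s] sz.
      by move: k0; rewrite -sz.
    by exists (fun _ => c0); split.
  have nx : forall x : T, False by move=> x; have := none x.
  by exists (fun x => match nx x with end); split=> x; case: (nx x).
case: (pickP [pred x | r x == N]) => [x /eqP rx | none]; last first.
  exists f; split=> [z|z w]; rewrite ltnS leq_eqVlt.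
    by case/orP=> [/eqP rz|]; [have := none z; rewrite /= rz eqxx | exact: Hf1].
  by case/orP=> [/eqP rz|]; [have := none z; rewrite /= rz eqxx | exact: Hf2].
pose ex := [seq f y | y <- enum T & (r y < N) && (N < r y + k)].
have szex : size ex <= k.-1.
  rewrite size_map.
  have -> : size [seq y <- enum T | (r y < N) && (N < r y + k)] =
       size (map r [seq y <- enum T | (r y < N) && (N < r y + k)]) by rewrite size_map.
  rewrite -(size_iota (N.+1 - k) k.-1); apply: uniq_leq_size.
    by rewrite map_inj_uniq // filter_uniq // enum_uniq.
  move=> z /mapP [y]; rewrite mem_filter => /andP [/andP [h1 h2] _] ->.
  rewrite mem_iota; apply/andP; split; lia.
have [c cL cex] : exists2 c, c \in L x & c \notin ex.
  apply/hasP; apply: contraT => /hasPn Hall.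
  have [uL sL] := HL x.
  suff : size (L x) <= size ex by rewrite sL; lia.
  apply: uniq_leq_size => // z zL.
  by have := Hall z zL; rewrite /= negbK.
exists (fun z => if z == x then c else f z); split.
  move=> z; rewrite ltnS leq_eqVlt; case: (z =P x) => [-> //|zx].
  case/orP=> [/eqP rz|]; last exact: Hf1.
  by case: zx; apply: rinj; rewrite rz rx.
move=> z w; rewrite ltnS leq_eqVlt.
case: (z =P x) => [-> | zx]; move=> Hz Hw Hk.
  have wnx : w != x by apply/eqP=> wE; move: Hw; rewrite wE; lia.
  rewrite (negbTE wnx).
  apply: contraNneq cex => ->; apply: map_f.
  by rewrite mem_filter mem_enum andbT -rx Hw Hk.
have rzN : r z < N.
  move: Hz; case/orP => [/eqP rz|//]; case: zx; apply: rinj; by rewrite rz rx.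
have wnx : w != x by apply/eqP=> wE; move: Hw rzN; rewrite wE rx; lia.
rewrite (negbTE wnx); exact: Hf2.
Qed.

Lemma bw_equitable (T : finType) (e : rel T) (k : nat) (s : T -> int) :
  0 < k -> injective s -> (forall x y, e x y -> x != y) ->
  (forall x y, e x y -> (s x - s y < k%:Z)%R /\ (s y - s x < k%:Z)%R) ->
  equitably_choosable e k.
Proof.
move=> k0 sinj eirr espan C L HL.
pose r x := #|[pred y | (s y < s x)%R]|.
have rlt : forall x y, (s y < s x)%R -> r y < r x.
  move=> x y h; apply: proper_card; apply/properP; split.
    by apply/subsetP => z; rewrite !inE => h2; apply: lt_trans h.
  by exists y; rewrite !inE ?ltxx.
have rinj : injective r.
  move=> x y E; case: (ltgtP (s x) (s y)) => [h|h|h]; last exact: sinj.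
    by have := rlt _ _ h; rewrite E ltnn.
  by have := rlt _ _ h; rewrite E ltnn.
have rn : forall x, r x < #|T|.
  move=> x; rewrite /r -(cardC [pred y | (s y < s x)%R]).
  rewrite -[X in X < _]addn0 ltn_add2l; apply/card_gt0P; exists x.
  by rewrite !inE ltxx.
have rspan : forall x y, (s y < s x)%R -> (s x - s y < k%:Z)%R -> r x < r y + k.
  move=> x y h1 h2; rewrite /r -(cardID [pred z | (s z < s y)%R]).
  have -> : #|[predI [pred y0 | (s y0 < s x)%R] & [pred z | (s z < s y)%R]]| =
            #|[pred z | (s z < s y)%R]|.
    by apply: eq_card => z; rewrite !inE andbC; case: (ltP (s z) (s y)) => // h3; rewrite (lt_trans h3 h1).
  rewrite ltn_add2l cardE.
  set D := enum _.
  have : size (map (fun z => absz (s z - s y)) D) <= size (iota 0 (absz (s x - s y))).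
    apply: uniq_leq_size.
      rewrite map_inj_in_uniq ?enum_uniq // => z w; rewrite !mem_enum !inE.
      case/andP=> z1 z2; case/andP=> w1 w2 E; apply: sinj.
      move: z1 w1; rewrite -!leNgt => z1 w1; lia.
    move=> n /mapP [z]; rewrite mem_enum !inE -leNgt => /andP [z1 z2] ->.
    rewrite mem_iota; lia.
  rewrite size_map size_iota; lia.
have [f [fL fP]] := rank_greedy k0 rinj HL.
have fP2 : forall x y, r x != r y -> r x < r y + k -> r y < r x + k -> f x != f y.
  move=> x y ne h1 h2; case: (ltngtP (r x) (r y)) => h3.
  - by rewrite eq_sym; apply: fP.
  - by apply: fP.
  - by rewrite h3 eqxx in ne.
exists f; split => //.
  move=> x y exy; have [h1 h2] := espan _ _ exy.
  have sne : s x != s y by apply: contra (eirr _ _ exy) => /eqP /sinj ->.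
  case: (ltgtP (s x) (s y)) => h3.
  - have := rlt _ _ h3; have := rspan _ _ h3 h2 => h4 h5.
    by apply: fP2 => //; lia.
  - have := rlt _ _ h3; have := rspan _ _ h3 h1 => h4 h5.
    by apply: fP2 => //; lia.
  - by rewrite h3 eqxx in sne.
move=> c; rewrite cardE.
rewrite -(size_map (fun v => r v %/ k)) -(size_iota 0 (ceil_div #|T| k)).
apply: uniq_leq_size.
  rewrite map_inj_in_uniq ?enum_uniq // => v w; rewrite !mem_enum !inE => /eqP fv /eqP fw E.
  apply: contraTeq (eqxx c) => vw.
  have rne : r v != r w by apply: contra vw => /eqP /rinj ->.
  have := fP2 v w rne; rewrite fv fw => H; apply: H.
    have := divn_eq (r v) k; have := divn_eq (r w) k; have := ltn_mod (r v) k.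
    have := ltn_mod (r w) k; rewrite k0 E; nia.
  have := divn_eq (r v) k; have := divn_eq (r w) k; have := ltn_mod (r v) k.
  have := ltn_mod (r w) k; rewrite k0 E; nia.
move=> n /mapP [v _ ->]; rewrite mem_iota add0n /ceil_div.
rewrite ltn_divLR //. have := divn_eq (#|T| + k.-1) k. have := ltn_mod (#|T| + k.-1) k.
have := rn v; rewrite k0; nia.
Qed.





Lemma half_facts n : n <= n.+1./2 + n.+1./2 <= n.+1.
Proof. have := odd_double_half n.+1; rewrite -addnn; case: (odd n.+1) => /=; lia. Qed.

Definition pR (m : nat) := (m.+1)./2.
Definition zslot (m s e : nat) : int :=
  if s < pR m then Posz (pR m * e + s + 1) else (- Posz ((m - pR m) * e + (s - pR m) + 1))%R.

Definition close (m : nat) (x y : int) := (x - y < Posz (m + 2))%R && (y - x < Posz (m + 2))%R.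

Lemma close_sym m x y : close m x y = close m y x.
Proof. by rewrite /close andbC. Qed.

Lemma closexx m x : close m x x.
Proof. rewrite /close subrr; lia. Qed.

Lemma G1 m s e e' : s < m -> e <= e' <= e + 2 -> close m (zslot m s e) (zslot m s e').
Proof.
move=> sm /andP [h1 h2]; rewrite /close /zslot; have := half_facts m; rewrite -/(pR m).
move: (pR m) => p hp.
have : p <= m -> (m - p) + p = m by lia.
move: (m - p) => q hq.
have [d [->]] : exists d, e' = e + d /\ d <= 2 by exists (e' - e); lia.
move=> hd; rewrite mulnDr.
case: ifP => hs; nia.
Qed.

Lemma G2 m s s' : s < m -> s' < m -> close m (zslot m s 0) (zslot m s' 0).
Proof.
move=> sm sm'; rewrite /close /zslot; have := half_facts m; rewrite -/(pR m).
move: (pR m) => p hp.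
have : p <= m -> (m - p) + p = m by lia.
move: (m - p) => q hq; rewrite !muln0.
case: ifP => hs; case: ifP => hs'; lia.
Qed.

Lemma G3 m s e : s < m -> e <= 1 -> close m 0 (zslot m s e).
Proof.
move=> sm he; rewrite /close /zslot; have := half_facts m; rewrite -/(pR m).
move: (pR m) => p hp.
have : p <= m -> (m - p) + p = m by lia.
move: (m - p) => q hq.
case: ifP => hs; nia.
Qed.

Lemma G4 m e1 e2 : 3 <= m -> e1 <= e2 + 1 -> e2 <= e1 + 2 ->
  close m (zslot m 1 e1) (zslot m 0 e2).
Proof.
move=> m3 h1 h2; rewrite /close /zslot; have := half_facts m; rewrite -/(pR m).
move: (pR m) => p hp.
have : p <= m -> (m - p) + p = m by lia.
move: (m - p) => q hq.
have p2 : 1 < p by lia.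
rewrite p2 (ltn_trans _ p2) //.
case: (leqP e1 e2) => h3.
  have [d [-> hd]] : exists d, e2 = e1 + d /\ d <= 2 by exists (e2 - e1); lia.
  rewrite mulnDr; nia.
have -> : e1 = e2 + 1 by lia.
rewrite mulnDr; nia.
Qed.

Lemma zslot_ne0 m s e : zslot m s e != 0%R.
Proof. rewrite /zslot; move: (pR m) => p; move: (m - p) => q; case: ifP => _; apply/eqP; lia. Qed.

Lemma zslot_inj m s e s' e' : s < m -> s' < m ->
  zslot m s e = zslot m s' e' -> s = s' /\ e = e'.
Proof.
move=> sm sm'; rewrite /zslot; have := half_facts m; rewrite -/(pR m).
move: (pR m) => p hp.
have : p <= m -> (m - p) + p = m by lia.
move: (m - p) => q hq.
case: ifP => hs; case: ifP => hs' E; try lia.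
  have E' : p * e + s = p * e' + s' by lia.
  case: (ltngtP e e') => he; [nia | nia | subst; lia].
have E' : q * e + (s - p) = q * e' + (s' - p) by lia.
case: (ltngtP e e') => he; [nia | nia | subst; lia].
Qed.

Definition hh (la lb : nat) := (la + lb).+1./2.
Arguments hh : simpl never.
Definition strand (a b la lb i j : nat) : nat * nat :=
  if i == a then (1, j)
  else if i == b then (if j < hh la lb then (0, j) else (1, la + lb - j.+1))
  else ((i - (a < i) - (b < i)).+2, j).

Definition S m a b la lb i j := zslot m (strand a b la lb i j).1 (strand a b la lb i j).2.

Lemma strand_lt m a b la lb i j : 3 <= m -> a < b -> b < m -> i < m ->
  (strand a b la lb i j).1 < m.
Proof.
move=> m3 ab bm im; rewrite /strand.
case: eqP => [_ | ia] /=; first lia.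
case: eqP => [_ | ib] /=; first by case: ifP => /= _; lia.
case: (ltnP a i) => h1; case: (ltnP b i) => h2 /=; lia.
Qed.

Lemma hh_facts la lb : la + lb <= hh la lb + hh la lb <= (la + lb).+1.
Proof. exact: half_facts. Qed.

Lemma N1 m a b la lb i j : 3 <= m -> a < b -> b < m -> i < m -> 1 <= la -> la <= lb ->
  (i = b -> j < lb) -> j <= 1 -> close m 0 (S m a b la lb i j).
Proof.
move=> m3 ab bm im la1 lab hb j1; rewrite /S.
apply: G3; first exact: strand_lt.
rewrite /strand; case: eqP => //= _; case: eqP => //= ib.
have := hh_facts la lb; move: (hh la lb) => h hf.
case: ifP => //= hj; have := hb ib; lia.
Qed.

Lemma N3 m a b la lb i i' : 3 <= m -> a < b -> b < m -> i < m -> i' < m -> 1 <= la ->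
  close m (S m a b la lb i 0) (S m a b la lb i' 0).
Proof.
move=> m3 ab bm im im' la1.
have E : forall i, (strand a b la lb i 0).2 = 0.
  move=> k; rewrite /strand; case: eqP => //= _; case: eqP => //= _.
  have := hh_facts la lb; move: (hh la lb) => h hf.
  case: ifP => //=; lia.
rewrite /S !E; apply: G2; exact: strand_lt.
Qed.

Lemma N4 m a b la lb : 3 <= m -> a < b -> b < m -> 1 <= la -> la <= lb ->
  close m (S m a b la lb a la.-1) (S m a b la lb b lb.-1).
Proof.
move=> m3 ab bm la1 lab; rewrite /S /strand eqxx /= (gtn_eqF ab) eqxx /=.
have := hh_facts la lb; move: (hh la lb) => h hf.
case: ifP => hj /=.
  apply: G4 => //; lia.
have -> : la + lb - lb.-1.+1 = la.-1 + 1 by lia.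
apply: G1; lia.
Qed.

Lemma N2 m a b la lb i j j' : 3 <= m -> a < b -> b < m -> i < m -> 1 <= la -> la <= lb ->
  (i = b -> j' < lb) -> j < j' <= j + 2 ->
  close m (S m a b la lb i j) (S m a b la lb i j').
Proof.
move=> m3 ab bm im la1 lab hb /andP [h1 h2].
have sl := strand_lt la lb j m3 ab bm im.
have sl' := strand_lt la lb j' m3 ab bm im.
rewrite /S; move: sl sl'; rewrite /strand.
case: eqP => [_ | ia] /=; first by move=> *; apply: G1 => //; lia.
case: eqP => [ib | ib] /=; last by move=> *; apply: G1 => //; lia.
have := hh_facts la lb; move: (hh la lb) => h hf.
have := hb ib => hjb.
case: (ltnP j h) => hj; case: (ltnP j' h) => hj' /=.
- by move=> *; apply: G1 => //; lia.
- by move=> *; rewrite close_sym; apply: G4 => //; lia.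
- lia.
- by move=> *; rewrite close_sym; apply: G1 => //; lia.
Qed.

Lemma strand_inj a b la lb i j i' j' : a < b -> 1 <= la -> la <= lb ->
  (i = a -> j < la) -> (i = b -> j < lb) -> (i' = a -> j' < la) -> (i' = b -> j' < lb) ->
  strand a b la lb i j = strand a b la lb i' j' -> i = i' /\ j = j'.
Proof.
move=> ab la1 lab h1 h2 h3 h4; rewrite /strand.
have := hh_facts la lb; move: (hh la lb) => h hf.
case: (i =P a) => ia; case: (i' =P a) => ia'; case: (i =P b) => ib; case: (i' =P b) => ib'; rewrite /=;
  try (case: ifP => /= ?); try (case: ifP => /= ?);
  case: (ltnP a i) => ?; case: (ltnP b i) => ?; case: (ltnP a i') => ?; case: (ltnP b i') => ? /=;
  move=> E; have E1 := congr1 fst E; have E2 := congr1 snd E; simpl in E1, E2; lia.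
Qed.

Definition vslot m (l : 'I_m -> nat) (a b : 'I_m) (x : option {i : 'I_m & 'I_(l i)}) : int :=
  match x with None => 0%R | Some s => S m a b (l a) (l b) (tag s) (tagged s) end.

Lemma valid_leg m (l : 'I_m -> nat) (s : {i : 'I_m & 'I_(l i)}) (c : 'I_m) :
  (tag s : nat) = c -> nat_of_ord (tagged s) < l c.
Proof. by move=> /val_inj <-; exact: ltn_ord. Qed.


Lemma T1 m (l : 'I_m -> nat) (a b : 'I_m) (t : {i : 'I_m & 'I_(l i)}) : 3 <= m -> a < b -> 1 <= l a -> l a <= l b ->
  nat_of_ord (tagged t) <= 1 -> close m 0 (@vslot m l a b (Some t)).
Proof.
move=> m3 ab la1 lab j1 /=; apply: N1 => //; try exact: ltn_ord.
by move=> E; apply: valid_leg.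
Qed.

Lemma T3 m (l : 'I_m -> nat) (a b : 'I_m) (s t : {i : 'I_m & 'I_(l i)}) : 3 <= m -> a < b -> 1 <= l a ->
  nat_of_ord (tagged s) = 0 -> nat_of_ord (tagged t) = 0 ->
  close m (@vslot m l a b (Some s)) (@vslot m l a b (Some t)).
Proof.
move=> m3 ab la1 js jt /=; rewrite js jt; apply: N3 => //; exact: ltn_ord.
Qed.

Lemma T2 m (l : 'I_m -> nat) (a b : 'I_m) (s t : {i : 'I_m & 'I_(l i)}) : 3 <= m -> a < b -> 1 <= l a -> l a <= l b ->
  tag s = tag t -> nat_of_ord (tagged s) <= nat_of_ord (tagged t) + 2 -> nat_of_ord (tagged t) <= nat_of_ord (tagged s) + 2 ->
  close m (@vslot m l a b (Some s)) (@vslot m l a b (Some t)).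
Proof.
move=> m3 ab la1 lab E h1 h2 /=.
have E' : (tag s : nat) = tag t by rewrite E.
rewrite E'.
have bm : b < m by exact: ltn_ord.
have im : tag t < m by exact: ltn_ord.
case: (ltngtP (tagged s) (tagged t)) => h.
- apply: N2 => //; last by lia.
  by move=> e; apply: valid_leg.
- rewrite close_sym; apply: N2 => //; last by lia.
  by move=> e; apply: valid_leg; rewrite E'.
- by rewrite h closexx.
Qed.

Lemma vslot_close m (l : 'I_m -> nat) (a b : 'I_m) (x y : option {i : 'I_m & 'I_(l i)}) : 3 <= m -> a < b -> 1 <= l a -> l a <= l b ->
  @spider_sq_plus_edge m l a b x y -> close m (@vslot m l a b x) (@vslot m l a b y).
Proof.
move=> m3 ab la1 lab.
rewrite /spider_sq_plus_edge => /orP [/orP [Hsq | He1] | He2].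
- case/andP: Hsq => _ /orP [Hadj | /existsP [z /andP [H1 H2]]].
  + move: Hadj; case: x => [s|]; case: y => [t|] //=.
    * case/andP => /eqP E /orP [/eqP h | /eqP h];
        apply: (T2 (a:=a) (b:=b) (s:=s) (t:=t)) => //; lia.
    * move=> /eqP h; rewrite close_sym; apply: (T1 (a:=a) (b:=b) (t:=s)) => //; lia.
    * move=> /eqP h; apply: (T1 (a:=a) (b:=b) (t:=t)) => //; lia.
  + move: H1 H2; case: x => [s|]; case: z => [w|]; case: y => [t|] //=.
    * case/andP => /eqP E1 /orP [/eqP h1 | /eqP h1]; case/andP => /eqP E2 /orP [/eqP h2 | /eqP h2];
        apply: (T2 (a:=a) (b:=b) (s:=s) (t:=t)) => //; try lia; by rewrite E1 E2.
    * case/andP => /eqP E1 /orP [/eqP h1 | /eqP h1] /eqP h2; rewrite close_sym;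
        apply: (T1 (a:=a) (b:=b) (t:=s)) => //; lia.
    * move=> /eqP h1 /eqP h2; apply: (T3 (a:=a) (b:=b) (s:=s) (t:=t)) => //.
    * move=> /eqP h1; case/andP => /eqP E2 /orP [/eqP h2 | /eqP h2];
        apply: (T1 (a:=a) (b:=b) (t:=t)) => //; lia.
    * by move=> _ _; apply: closexx.
- move: He1; case: x => [s|]; case: y => [t|] //=; rewrite ?andbF //.
  case/andP => /andP [/eqP E1 /eqP h1] /andP [/eqP E2 /eqP h2].
  have -> : (tag s : nat) = a by rewrite E1.
  have -> : (tag t : nat) = b by rewrite E2.
  have -> : (tagged s : nat) = (l a).-1 by rewrite -h1.
  have -> : (tagged t : nat) = (l b).-1 by rewrite -h2.
  by apply: N4 => //; exact: ltn_ord.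
- move: He2; case: x => [s|]; case: y => [t|] //=; rewrite ?andbF //.
  case/andP => /andP [/eqP E1 /eqP h1] /andP [/eqP E2 /eqP h2].
  have -> : (tag s : nat) = b by rewrite E1.
  have -> : (tag t : nat) = a by rewrite E2.
  have -> : (tagged s : nat) = (l b).-1 by rewrite -h1.
  have -> : (tagged t : nat) = (l a).-1 by rewrite -h2.
  by rewrite close_sym; apply: N4 => //; exact: ltn_ord.
Qed.

Lemma vslot_inj m (l : 'I_m -> nat) (a b : 'I_m) : 3 <= m -> a < b -> 1 <= l a -> l a <= l b ->
  injective (@vslot m l a b).
Proof.
move=> m3 ab la1 lab x y.
have bm : b < m by exact: ltn_ord.
case: x => [s|]; case: y => [t|] //=.
- move=> E; rewrite /S in E.
  have [E1 E2] := zslot_inj (strand_lt _ _ _ m3 ab bm (ltn_ord _))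
                          (strand_lt _ _ _ m3 ab bm (ltn_ord _)) E.
  have E3 : strand a b (l a) (l b) (tag s) (tagged s) = strand a b (l a) (l b) (tag t) (tagged t).
    by rewrite [LHS]surjective_pairing [RHS]surjective_pairing E1 E2.
  have vs := @valid_leg m l s; have vt := @valid_leg m l t.
  have [Ei Ej] := strand_inj ab la1 lab (vs a) (vs b) (vt a) (vt b) E3.
  case: s t Ei Ej {E E1 E2 E3 vs vt} => [i j] [i' j'] /= Ei Ej.
  have Ei' : i = i' by apply: val_inj.
  subst i'; have -> : j = j' by apply: val_inj.
  done.
- by move=> E; have := zslot_ne0 m (strand a b (l a) (l b) (tag s) (tagged s)).1
                      (strand a b (l a) (l b) (tag s) (tagged s)).2; rewrite -[zslot _ _ _]/(S _ _ _ _ _ _ _) E eqxx.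
- by move=> E; have := zslot_ne0 m (strand a b (l a) (l b) (tag t) (tagged t)).1
                      (strand a b (l a) (l b) (tag t) (tagged t)).2; rewrite -[zslot _ _ _]/(S _ _ _ _ _ _ _) -E eqxx.
Qed.

Theorem lemma3p9 (m : nat) (l : 'I_m -> nat) (a b : 'I_m) :
  3 <= m ->
  (forall i : 'I_m, 0 < l i) ->
  (forall i j : 'I_m, i <= j -> l i <= l j) ->
  (forall i : 'I_m, i.+1 = m -> 3 <= l i) ->
  a < b ->
  equitably_choosable (@spider_sq_plus_edge m l a b) (m + 2).
Proof.
move=> m3 lpos lmono _ ab.
have la1 := lpos a.
have lab : l a <= l b by apply: lmono; exact: ltnW.
apply: (@bw_equitable _ _ (m + 2) (@vslot m l a b)).
- by rewrite addn2.
- exact: vslot_inj.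
- move=> x y; rewrite /spider_sq_plus_edge /sq_rel.
  case/orP => [/orP [/andP [] // | H] | H]; apply/eqP => E; subst y; move: H;
    case: x => [s|] //= /andP [/andP [/eqP h1 _] /andP [/eqP h2 _]];
    by move: ab; rewrite -h1 -h2 ltnn.
- move=> x y /(vslot_close m3 ab la1 lab) /andP [h1 h2]; split => //.
Qed.
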